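(* For every weak composition $\alpha$, the underlying diagram (ignoring labels) of $\mathsf{snow}(D(\alpha))$ equals $\bigcup_{(r,c)\in\mathsf{dark}(\alpha)}\big(([r]\times\{c\})\cup(\{r\}\times[c])\big)$.
   Context: A weak composition is an infinite sequence of nonnegative integers with finitely many positive entries. $D(\alpha)=\{(r,c):1\le c\le\alpha_r\}$, $(r,c)$ being the cell in row $r$ (row 1 on top), column $c$; $[m]=\{1,\dots,m\}$. For a diagram $D$, $\mathsf{snow}(D)$ is built by iterating through rows from bottom to top: in row $r$ take the rightmost cell $(r,c)\in D$ such that column $c$ contains no dark cloud yet; if it exists label it a dark cloud and add snowflake cells at $(r',c)$ for all $r'<r$ with $(r',c)\notin D$. $\mathsf{dark}(\alpha)$ is the set of dark-cloud cells of $\mathsf{snow}(D(\alpha))$. *)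

(* Defs.v *)
From mathcomp Require Import all_boot.
Set Implicit Arguments. Unset Strict Implicit. Unset Printing Implicit Defensive.

(* A cell (r, c): row r (row 1 on top), column c. *)
Definition cell := (nat * nat)%type.

(* A weak composition is represented by the finite list of its entries
   alpha_1, alpha_2, ...; all later entries are 0.  alpha_r = nth 0 a r.-1. *)
Definition wcomp_entry (a : seq nat) (r : nat) : nat := nth 0 a r.-1.

Definition diagram (a : seq nat) : seq cell :=
  [seq (r, c) | r <- iota 1 (size a), c <- iota 1 (wcomp_entry a r)].

Definition max_row (D : seq cell) : nat := foldr maxn 0 [seq x.1 | x <- D].

(* One step of the snow construction, processing row r given the list of
   dark clouds already placed: take the rightmost cell (r,c) of D whose
   column c contains no dark cloud yet, and make it a dark cloud. *)
Definition snow_step (D : seq cell) (dark : seq cell) (r : nat) : seq cell :=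
  let cands := [seq x <- D | (x.1 == r) && (x.2 \notin map snd dark)] in
  if cands is [::] then dark else (r, foldr maxn 0 [seq x.2 | x <- cands]) :: dark.

(* Dark clouds of snow(D): iterate through rows from bottom to top. *)
Definition snow_dark (D : seq cell) : seq cell :=
  foldl (snow_step D) [::] (rev (iota 1 (max_row D))).

Definition snowflake (D : seq cell) (x : cell) : bool :=
  (x \notin D) &&
  has (fun d : cell => (1 <= x.1 < d.1) && (x.2 == d.2)) (snow_dark D).

Definition snow_underlying (D : seq cell) (x : cell) : bool :=
  (x \in D) || snowflake D x.

Definition dark (a : seq nat) : seq cell := snow_dark (diagram a).

(* Main.v *)
Require Import Defs.
From mathcomp Require Import all_boot.
From mathcomp Require Import zify.

Lemma mem_diagram a r c :
  ((r, c) \in diagram a) = [&& 1 <= r <= size a & 1 <= c <= wcomp_entry a r].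
Proof.
apply/idP/idP.
  move=> /allpairsPdep [x [y [hx hy [-> ->]]]].
  by move: hx hy; rewrite !mem_iota => hx hy; apply/andP; split; lia.
move=> /andP [h1 h2]; apply/allpairsPdep; exists r, c; split => //;
  rewrite mem_iota; lia.
Qed.

Lemma le_foldr_max (T : eqType) (f : T -> nat) l x :
  x \in l -> f x <= foldr maxn 0 (map f l).
Proof.
elim: l => // y l IH; rewrite inE => /orP [/eqP ->|/IH h] /=;
  rewrite leq_max ?leqnn ?h ?orbT //.
Qed.

Lemma foldr_max_mem (T : eqType) (f : T -> nat) l :
  l != [::] -> exists2 x, x \in l & f x = foldr maxn 0 (map f l).
Proof.
elim: l => // y l IH _.
case: l IH => [|z l] IH.
  by exists y; rewrite ?inE ?eqxx //= maxn0.
have [x xl hx] := IH isT.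
move: hx => /= hx; rewrite /= -hx.
case: (leqP (f y) (f x)) => h.
  exists x; [by rewrite inE xl orbT | lia].
exists y; [by rewrite inE eqxx | lia].
Qed.

Lemma step_mem D S r x :
  x \in snow_step D S r -> x \in S \/ (x.1 = r /\ x \in D).
Proof.
rewrite /snow_step.
set cands := [seq _ <- D | _].
case E: cands => [|y l]; first by left.
rewrite inE => /orP [/eqP ->|]; last by left.
right; split => //.
have [z zin zeq] := @foldr_max_mem _ snd (y :: l) isT.
rewrite -zeq.
move: zin; rewrite -E mem_filter => /andP [/andP [/eqP <- _] zD].
by case: z zeq zD.
Qed.

Lemma step_sub D S r : {subset S <= snow_step D S r}.
Proof.
move=> x xS; rewrite /snow_step.
by case: [seq _ <- D | _] => [|y l] //; rewrite inE xS orbT.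
Qed.

Lemma fold_sub D s S : {subset S <= foldl (snow_step D) S s}.
Proof.
elim: s S => [|r s IH] S x xS //=; apply: IH; exact: step_sub.
Qed.

Lemma fold_mem D s S x :
  x \in foldl (snow_step D) S s -> x \in S \/ (x.1 \in s /\ x \in D).
Proof.
elim: s S => [|r s IH] S /=; first by left.
move=> /IH [/step_mem [h|[h1 h2]]|[h1 h2]].
- by left.
- by right; rewrite inE h1 eqxx.
- by right; rewrite inE h1 orbT.
Qed.

Lemma dark_in D x : x \in snow_dark D -> x \in D.
Proof. by move=> /fold_mem [|[]]. Qed.

Lemma dark_cover D r c : (r, c) \in D -> 1 <= r ->
  exists2 d : cell, d \in snow_dark D &
    (r <= d.1 /\ c = d.2) \/ (r = d.1 /\ c <= d.2).
Proof.
move=> rcD r1.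
set m := max_row D.
have rm : r <= m by rewrite /m /max_row; by have := le_foldr_max _ (fun x : cell => x.1) _ _ rcD.
have E : iota 1 m = iota 1 r.-1 ++ r :: iota r.+1 (m - r).
  rewrite {1}(_ : m = r.-1 + (m - r).+1); last by lia.
  rewrite iotaD; congr (_ ++ _).
  have -> : 1 + r.-1 = r by lia.
  by [].
rewrite /snow_dark -/m E rev_cat rev_cons foldl_cat foldl_rcons.
set S := foldl _ [::] (rev (iota r.+1 _)).
case cS: (c \in map snd S).
  move/mapP: cS => [d dS cd].
  exists d; first by apply: fold_sub; apply: step_sub.
  left; split => //.
  move: dS => /fold_mem [//|[]]; rewrite mem_rev mem_iota => /andP [/ltnW h _] _ //.
rewrite /snow_step.
set cands := [seq _ <- D | _].
have rcC : (r, c) \in cands by rewrite mem_filter /= eqxx cS rcD.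
case E2: cands => [|y l]; first by rewrite E2 in rcC.
exists (r, foldr maxn 0 [seq x.2 | x <- y :: l]).
  by apply: fold_sub; rewrite inE eqxx.
right; split => //=.
by have := le_foldr_max _ (fun x : cell => x.2) _ _ rcC; rewrite E2.
Qed.

Theorem lemma4p14 (a : seq nat) (r c : nat) :
  snow_underlying (diagram a) (r, c) <->
  exists2 d : cell, d \in dark a &
    ((1 <= r <= d.1) /\ c = d.2) \/ (r = d.1 /\ 1 <= c <= d.2).
Proof.
split.
  rewrite /snow_underlying => /orP [rcD|].
    have := rcD; rewrite mem_diagram => /andP [/andP [r1 _] /andP [c1 _]].
    have [d dd h] := dark_cover _ _ _ rcD r1.
    exists d => //; case: h => [[h1 h2]|[h1 h2]]; [left|right]; split => //;
      apply/andP; split => //.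
  rewrite /snowflake => /andP [_ /hasP [d dd /= /andP [h1 /eqP h2]]].
  by exists d => //; left; split => //; lia.
move=> [[dr dc] dd h].
have dD : (dr, dc) \in diagram a by exact: dark_in.
rewrite /snow_underlying.
case: h => [[h1 /= ->]|[/= -> h2]].
  case rcD: ((r, dc) \in diagram a) => //=.
  rewrite /snowflake rcD /=; apply/hasP; exists (dr, dc) => //=.
  rewrite eqxx andbT.
  have : r != dr by apply/eqP => rdr; rewrite rdr dD in rcD.
  by move: h1 => /= h1; lia.
apply/orP; left; move: dD; rewrite !mem_diagram; lia.
Qed.
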